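(* Let $P\in\mathcal{N}_2$ via the pair of chain covers $\{\mathcal{C}_1,\mathcal{C}_2\}$. Let $Q\subseteq P$ be a diamond consisting of saturated chains $\bm{a}$ and $\bm{b}$ with common minimum $x$ and common maximum $y$, and suppose that $Q\cup\bm{C}\cup\bm{D}$ is a diamond with bottom chain $\bm{C}$ of length $k$ and top chain $\bm{D}$ of length $l$ in $P$. Suppose $Q$ has Type I with respect to $\{\mathcal{C}_1,\mathcal{C}_2\}$. Then, after possibly interchanging the roles of $\mathcal{C}_1$ and $\mathcal{C}_2$, there is a chain of $\mathcal{C}_1$ containing $(\bm{C}\cup\bm{a})\setminus\{y\}$, a chain of $\mathcal{C}_2$ containing $(\bm{C}\cup\bm{b})\setminus\{y\}$, a chain of $\mathcal{C}_2$ containing $(\bm{a}\cup\bm{D})\setminus\{x\}$, and a chain of $\mathcal{C}_1$ containing $(\bm{b}\cup\bm{D})\setminus\{x\}$. Moreover, $$\max\{|\bm{C}|,|\bm{D}|\} < \min\{|\bm{a}|-2,\ |\bm{b}|-2\}.$$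
   Context: All posets are finite; $|\cdot|$ denotes number of elements. An edge of a poset is a covering relation $x \lessdot y$. A chain cover of a poset $P$ is a set of pairwise disjoint saturated chains whose union is $P$. A labeling of $P$ is a map $\lambda:P\to\mathbb{R}$. For a chain cover $\mathcal{C}$, $\mathcal{C}$-sorting a labeling means: for each chain $\bm{c}\in\mathcal{C}$, permute the labels $\{\lambda(v): v\in \bm{c}\}$ among the elements of $\bm{c}$ so that they are non-decreasing from the minimum of $\bm{c}$ to its maximum. A finite poset $P$ is in $\mathcal{N}_2$ via $\{\mathcal{C}_1,\mathcal{C}_2\}$ if $\{\mathcal{C}_1,\mathcal{C}_2\}$ is an unordered pair of chain covers of $P$ such that (1) for every labeling of $P$ and for $i=1$ and $i=2$, first $\mathcal{C}_i$-sorting and then $\mathcal{C}_{3-i}$-sorting leaves the labels non-decreasing along every chain of $\mathcal{C}_i$; and (2) every edge of $P$ is contained in some chain of $\mathcal{C}_1$ or of $\mathcal{C}_2$. A diamond in a poset is a convex subposet (i.e. $u\le w\le v$ with $u,v$ in it implies $w$ in it) that is the union of two distinct saturated chains which intersect only in a common minimal element and a common maximal element. A diamond with bottom chain of length $k$ and top chain of length $l$ is a convex subposet consisting of a diamond with minimum $x$ and maximum $y$, a chain $\bm{C}=\{w_k\lessdot\cdots\lessdot w_1\}$ of $k$ elements with $w_1\lessdot x$, and a chain $\bm{D}=\{z_1\lessdot\cdots\lessdot z_l\}$ of $l$ elements with $y\lessdot z_1$, with no other elements or relations among these elements than those generated by the stated ones. A diamond with chains $\bm{a},\bm{b}$ (minimum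 $x$, maximum $y$) has Type I with respect to $\{\mathcal{C}_1,\mathcal{C}_2\}$ if, after possibly interchanging $\mathcal{C}_1$ and $\mathcal{C}_2$, there is a chain of $\mathcal{C}_1$ containing $\bm{a}\setminus\{y\}$, a chain of $\mathcal{C}_2$ containing $\bm{b}\setminus\{y\}$, a chain of $\mathcal{C}_1$ containing $\bm{b}\setminus\{x\}$, and a chain of $\mathcal{C}_2$ containing $\bm{a}\setminus\{x\}$. *)

(* Defs.v *)
From HB Require Import structures.
From mathcomp Require Import all_boot all_order all_algebra.
From mathcomp Require Import Rstruct.
From Stdlib Require Import Reals.
Set Implicit Arguments. Unset Strict Implicit. Unset Printing Implicit Defensive.
Import Order.TTheory GRing.Theory Num.Theory.

Section Posets.
Variables (disp : Order.disp_t) (T : finPOrderType disp).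
Local Open Scope order_scope.

Definition covers (x y : T) : bool :=
  (x < y) && [forall z, ~~ ((x < z) && (z < y))].

Definition sat_chain (c : {set T}) : bool :=
  [&& c != set0,
      [forall u in c, forall v in c, (u <= v) || (v <= u)] &
      [forall u in c, forall v in c,
         ((u < v) && [forall w in c, ~~ ((u < w) && (w < v))]) ==> covers u v]].

Definition chain_cover (C : {set {set T}}) : bool :=
  partition C [set: T] && [forall c in C, sat_chain c].

Definition is_minof (c : {set T}) (x : T) : bool :=
  (x \in c) && [forall z in c, x <= z].
Definition is_maxof (c : {set T}) (x : T) : bool :=
  (x \in c) && [forall z in c, z <= x].

Definition convex (S : {set T}) : bool :=
  [forall u in S, forall v in S, forall w, ((u <= w) && (w <= v)) ==> (w \in S)].

(* C-sorting a labeling: on each chain c of C, the labels of c are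
   redistributed in non-decreasing order from the minimum to the maximum
   of c: the element x of c with exactly r elements of c below it gets the
   r-th smallest label of c. *)
Definition csort (C : {set {set T}}) (lam : T -> R) : T -> R :=
  fun x => let c := pblock C x in
    nth 0%R (sort (fun u v : R => (u <= v)%O) [seq lam y | y <- enum c])
        #|[set y in c | y < x]|.

Definition nondecr_on (C : {set {set T}}) (lam : T -> R) : Prop :=
  forall c, c \in C -> forall u v, u \in c -> v \in c -> u <= v -> (lam u <= lam v)%R.

Definition N2_via (C1 C2 : {set {set T}}) : Prop :=
  [/\ chain_cover C1, chain_cover C2,
      forall lam : T -> R, nondecr_on C1 (csort C2 (csort C1 lam)),
      forall lam : T -> R, nondecr_on C2 (csort C1 (csort C2 lam)) &
      forall u v, covers u v -> exists2 c, c \in C1 :|: C2 & (u \in c) && (v \in c)].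

Definition diamond (a b : {set T}) (x y : T) : Prop :=
  [/\ sat_chain a && sat_chain b, a != b,
      [&& is_minof a x, is_minof b x, is_maxof a y & is_maxof b y],
      a :&: b = [set x; y] & convex (a :|: b)].

Definition diamond_bt (a b : {set T}) (x y : T) (Cb Dt : {set T}) : Prop :=
  [/\ diamond a b x y, sat_chain Cb && sat_chain Dt,
      exists2 w1, is_maxof Cb w1 & covers w1 x,
      exists2 z1, is_minof Dt z1 & covers y z1 &
      convex (a :|: b :|: Cb :|: Dt)].

Definition in_chain_of (C : {set {set T}}) (S : {set T}) : Prop :=
  exists2 c, c \in C & S \subset c.

Definition typeI_or (C1 C2 : {set {set T}}) (a b : {set T}) (x y : T) : Prop :=
  [/\ in_chain_of C1 (a :\ y), in_chain_of C2 (b :\ y),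
      in_chain_of C1 (b :\ x) & in_chain_of C2 (a :\ x)].

Definition typeI (C1 C2 : {set {set T}}) (a b : {set T}) (x y : T) : Prop :=
  typeI_or C1 C2 a b x y \/ typeI_or C2 C1 a b x y.

End Posets.

(* Main.v *)
Require Import Defs.
From mathcomp Require Import all_boot all_order all_algebra Rstruct.
From Stdlib Require Import Reals Lra Lia FunctionalExtensionality.
From mathcomp Require Import zify.
Set Implicit Arguments. Unset Strict Implicit. Unset Printing Implicit Defensive.
Import Order.TTheory.

Local Notation "x ⊑ y" := (@Order.le _ _ x y) (at level 70, no associativity).
Local Notation "x ⊏ y" := (@Order.lt _ _ x y) (at level 70, no associativity).

Lemma count_enum_card (T : finType) (A : {set T}) (p : pred T) :
  count p (enum A) = #|[set v in A | p v]|.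
Proof.
rewrite -size_filter.
have -> : #|[set v in A | p v]| = #|filter p (enum A)|.
  by apply: eq_card => v; rewrite inE mem_filter mem_enum andbC.
by apply/esym/card_uniqP; rewrite filter_uniq // enum_uniq.
Qed.

Local Open Scope R_scope.

Lemma sorted01 z o : sorted <=%O (nseq z 0 ++ nseq o 1).
Proof.
have h1 : forall o, sorted <=%O (nseq o 1).
  by elim=> [|n IH] //=; case: n IH => //= n ->; rewrite lexx.
elim: z => [|z IH] //=; rewrite (path_sortedE le_trans) IH andbT all_cat.
apply/andP; split; apply/allP=> t /nseqP [-> _] //.
Qed.

Lemma sort01 (s : seq R) : all (fun t => (t == 0) || (t == 1)) s ->
  sort <=%O s = nseq (count (pred1 0) s) 0 ++ nseq (count (pred1 1) s) 1.
Proof.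
move=> H; apply: le_sorted_eq; first exact: sort_le_sorted.
  exact: sorted01.
rewrite perm_sort.
elim: s H => [|t s IH] //= /andP [/orP [] /eqP -> Hs].
  rewrite eqxx /= (_ : (0 == 1) = false) ?add0n ?add1n /=; last first.
    by apply/negbTE/eqP => H; lra.
  by rewrite perm_cons IH.
rewrite eqxx /= (_ : (1 == 0) = false) ?add0n ?add1n /=; last first.
  by apply/negbTE/eqP => H; lra.
by rewrite perm_sym -cat1s perm_catCA /= perm_cons perm_sym; apply: IH.
Qed.

Local Close Scope R_scope.

Section Blocks.
Variables (disp : Order.disp_t) (T : finPOrderType disp).
Implicit Types (C : {set {set T}}) (S c : {set T}) (u v w y : T).

Lemma cc_triv C : chain_cover C -> trivIset C.
Proof. by case/andP=> /and3P []. Qed.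

Lemma cc_cover C v : chain_cover C -> v \in cover C.
Proof. by case/andP=> /and3P [/eqP -> _ _] _; rewrite inE. Qed.

Lemma pb_self C v : chain_cover C -> v \in pblock C v.
Proof. by move=> H; rewrite mem_pblock cc_cover. Qed.

Lemma pb_in C v : chain_cover C -> pblock C v \in C.
Proof. by move=> H; rewrite pblock_mem // cc_cover. Qed.

Lemma pb_eq C u v : chain_cover C -> u \in pblock C v -> pblock C u = pblock C v.
Proof. by move=> H; apply: same_pblock; apply: cc_triv. Qed.

Lemma pb_of C c v : chain_cover C -> c \in C -> v \in c -> pblock C v = c.
Proof. by move=> H; apply: def_pblock; apply: cc_triv. Qed.

Lemma pb_chain C v : chain_cover C -> sat_chain (pblock C v).
Proof. by move=> H; case/andP: (H) => _ /forall_inP; apply; apply: pb_in. Qed.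

Lemma sc_cmp c u v : sat_chain c -> u \in c -> v \in c -> (u ⊑ v) || (v ⊑ u).
Proof. by case/and3P=> _ /forall_inP H _ hu hv; move/forall_inP: (H u hu); apply. Qed.

Lemma pb_cmp C w u v : chain_cover C -> u \in pblock C w -> v \in pblock C w ->
  (u ⊑ v) || (v ⊑ u).
Proof. by move=> H; apply: sc_cmp; apply: pb_chain. Qed.

Lemma sc_cover c u v : sat_chain c -> u \in c -> v \in c -> u ⊏ v ->
  (forall w, w \in c -> u ⊏ w -> w ⊏ v -> False) -> covers u v.
Proof.
case/and3P=> _ _ /forall_inP H hu hv luv hw.
move/forall_inP: (H u hu) => /(_ v hv) /implyP; apply; rewrite luv /=.
by apply/forall_inP => w wc; apply/negP => /andP [h1 h2]; apply: (hw w).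
Qed.

Lemma covers_lt u v : covers u v -> u ⊏ v.
Proof. by case/andP. Qed.

Lemma covers_btw u v w : covers u v -> u ⊏ w -> w ⊏ v -> False.
Proof. by case/andP=> _ /forallP /(_ w) /negP H h1 h2; apply: H; rewrite h1. Qed.

Lemma covers_le u v w : covers u v -> u ⊑ w -> w ⊑ v -> (w == u) || (w == v).
Proof.
move=> H h1 h2; case: (eqVneq w u) => //= wu; case: (eqVneq w v) => // wv.
exfalso; apply: (covers_btw (w:=w) H); rewrite lt_neqAle ?h1 ?h2 ?andbT /=; [by rewrite eq_sym | by []].
Qed.

Lemma card_split C v : chain_cover C ->
  #|[set y in pblock C v | y ⊏ v]| + #|[set w in pblock C v | v ⊑ w]|
  = #|pblock C v|.
Proof.
move=> H; rewrite -(cardsID [set y | y ⊏ v] (pblock C v)); congr (_ + _).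
  by apply: eq_card => w; rewrite !inE.
apply: eq_card => w; rewrite !inE; case wc: (w \in pblock C v); rewrite ?andbF //=.
have hc : (v >=< w)%O by rewrite /Order.comparable orbC; apply: (pb_cmp H wc (pb_self v H)).
by rewrite andbT (comparable_leNgt hc).
Qed.

Local Open Scope R_scope.

Definition ind S : T -> R := fun v => if v \in S then 1 else 0.

Lemma csort_ind C S v : chain_cover C ->
  csort C (ind S) v =
  if leq #|[set w in pblock C v | (v <= w)%O]| #|S :&: pblock C v| then 1 else 0.
Proof.
move=> H; rewrite /csort sort01; last first.
  by apply/allP=> t /mapP [w _ ->]; rewrite /ind; case: (w \in S); rewrite eqxx ?orbT.
rewrite !count_map !count_enum_card.
set z := #|[set _ in _ | _]|; set o := #|[set _ in _ | _]|.
have e1 : forall w, (ind S w == 1) = (w \in S).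
  move=> w; rewrite /ind; case: (w \in S); rewrite ?eqxx //.
  by apply/negbTE/eqP => h; lra.
have e0 : forall w, (ind S w == 0) = (w \notin S).
  move=> w; rewrite /ind; case: (w \in S); rewrite ?eqxx //.
  by apply/negbTE/eqP => h; lra.
have Ho : o = #|S :&: pblock C v|.
  by apply: eq_card => w; rewrite !inE /= e1 andbC.
have Hz : addn z o = #|pblock C v|.
  rewrite -(cardsID S (pblock C v)) addnC; congr addn.
    by rewrite Ho setIC.
  by apply: eq_card => w; rewrite !inE /= e0 andbC.
rewrite -Ho; have Hs := card_split v H.
have Hup : leq 1 #|[set w in pblock C v | (v <= w)%O]|.
  by apply/card_gt0P; exists v; rewrite inE pb_self // lexx.
rewrite nth_cat size_nseq.
case: ltnP => h1.
  rewrite nth_nseq h1; case: leqP => // h2; exfalso; lia.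
rewrite nth_nseq; case: ltnP => h2; case: leqP => h3 //; exfalso; lia.
Qed.


Local Close Scope R_scope.

Definition upc C v := #|[set w in pblock C v | v ⊑ w]|.
Definition dnc C v := #|[set w in pblock C v | w ⊏ v]|.
Definition upcl C S := forall u v, v \in pblock C u -> u ⊑ v -> u \in S -> v \in S.
Definition dncl C S := forall u v, v \in pblock C u -> v ⊑ u -> u \in S -> v \in S.
Definition Nsort C D := forall lam : T -> R, nondecr_on D (csort C (csort D lam)).

Lemma upc_S C v : chain_cover C -> upc C v = #|[set w in pblock C v | v ⊏ w]|.+1.
Proof.
move=> H; rewrite /upc.
have -> : [set w in pblock C v | v ⊑ w] = v |: [set w in pblock C v | v ⊏ w].
  apply/setP => w; rewrite !inE le_eqVlt; case: (eqVneq w v) => [->|] //=.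
  by rewrite ?lexx pb_self.
by rewrite cardsU1 !inE ltxx andbF.
Qed.

Lemma dnc_S C v : chain_cover C -> #|[set w in pblock C v | w ⊑ v]| = (dnc C v).+1.
Proof.
move=> H; rewrite /dnc.
have -> : [set w in pblock C v | w ⊑ v] = v |: [set w in pblock C v | w ⊏ v].
  apply/setP => w; rewrite !inE le_eqVlt; case: (eqVneq w v) => [->|] //=.
  by rewrite ?lexx pb_self.
by rewrite cardsU1 !inE ltxx andbF.
Qed.

Lemma csort_id C S : chain_cover C -> upcl C S -> csort C (ind S) = ind S.
Proof.
move=> H HS; apply: functional_extensionality => v.
rewrite csort_ind //; rewrite [in RHS]/ind; case vS: (v \in S).
  rewrite ifT //; apply: subset_leq_card; apply/subsetP => w; rewrite !inE => /andP [wc vw].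
  by rewrite wc andbT; apply: (HS v).
rewrite ifF //; apply/negbTE; rewrite -ltnNge.
apply: (@leq_ltn_trans #|[set w in pblock C v | v ⊏ w]|); last by rewrite -upc_S.
apply: subset_leq_card; apply/subsetP => w; rewrite !inE => /andP [wS wc].
rewrite wc /=; have := pb_cmp H wc (pb_self v H).
case/orP => h.
  exfalso; move: vS; rewrite (HS w v) //.
  by rewrite (pb_eq H wc) pb_self.
rewrite lt_neqAle h andbT; apply/eqP => E; by rewrite E wS in vS.
Qed.

Lemma Kup C D S u v : chain_cover C -> chain_cover D -> Nsort C D -> upcl D S ->
  v \in pblock D u -> u ⊑ v ->
  (upc C u <= #|S :&: pblock C u|)%N -> (#|S :&: pblock C v| < upc C v)%N -> False.
Proof.
move=> HC HD HN HS vu uv h1 h2.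
have := HN (ind S) (pblock D u) (pb_in u HD) u v (pb_self u HD) vu uv.
rewrite csort_id // !csort_ind //; rewrite /upc in h1 h2.
have -> : leq #|[set w in pblock C u | (u <= w)%O]| #|S :&: pblock C u| = true by exact: h1.
have -> : leq #|[set w in pblock C v | (v <= w)%O]| #|S :&: pblock C v| = false.
  by apply/negbTE; rewrite -ltnNge.
move=> h; lra.
Qed.

Lemma Kdn C D Z u v : chain_cover C -> chain_cover D -> Nsort C D -> dncl D Z ->
  v \in pblock D u -> u ⊑ v ->
  (#|Z :&: pblock C u| <= dnc C u)%N -> (dnc C v < #|Z :&: pblock C v|)%N -> False.
Proof.
move=> HC HD HN HZ vu uv h1 h2.
apply: (Kup (S := ~: Z) HC HD HN _ vu uv).
- move=> s t ts st; rewrite !inE; apply: contra => tZ.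
  apply: (HZ t s) => //; rewrite (pb_eq HD ts); exact: pb_self.
- have e1 := card_split u HC; have e2 := cardsID Z (pblock C u).
  rewrite setIC -setDE; rewrite /upc; rewrite /dnc setIC in h1; lia.
- have e1 := card_split v HC; have e2 := cardsID Z (pblock C v).
  rewrite setIC -setDE; rewrite /upc; rewrite /dnc setIC in h2; lia.
Qed.

End Blocks.

Section Gen.
Variables (disp : Order.disp_t) (T : finPOrderType disp).
Implicit Types (C D : {set {set T}}) (S c : {set T}) (u v w y : T).

Lemma pb_mem_eq C u v w : chain_cover C -> u \in pblock C v -> w \in pblock C v -> w \in pblock C u.
Proof. by move=> H h1 h2; rewrite (pb_eq H h1). Qed.

Lemma G1 C D u v a' : chain_cover C -> chain_cover D -> Nsort C D ->
  covers u v -> u \in pblock D v -> u \notin pblock C v -> a' \in pblock C v -> v ⊑ a' ->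
  (forall t, t \in pblock C u -> u ⊑ t -> t ⊑ a' -> a' \in pblock D t -> False) -> False.
Proof.
move=> HC HD HN cuv uD uC aC va Ht.
pose S := [set s | [exists t in pblock C u, (u ⊑ t) && (t ⊑ s) && (s \in pblock D t)]].
have uv := ltW (covers_lt cuv).
have hup : upcl D S.
  move=> s s' hs' ss'; rewrite !inE => /exists_inP [t ht /andP [/andP [ut ts] st]].
  apply/exists_inP; exists t => //; rewrite ut (le_trans ts ss') /=.
  by rewrite -(pb_eq HD st).
have vu : v \in pblock D u by rewrite (pb_eq HD uD) pb_self.
have h1 : (upc C u <= #|S :&: pblock C u|)%N.
  apply: subset_leq_card; apply/subsetP => w; rewrite !inE => /andP [wc uw].
  rewrite wc andbT; apply/exists_inP; exists w => //; rewrite uw lexx pb_self //=.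
have e : upc C v = (#|[set w in pblock C v | v ⊑ w] :\ a'|).+1.
  by rewrite /upc (cardsD1 a') inE aC va.
have h2 : (#|S :&: pblock C v| < upc C v)%N.
  rewrite e ltnS; apply: subset_leq_card; apply/subsetP => q.
  rewrite !inE => /andP [/exists_inP [t ht /andP [/andP [ut tq] qt]] qc].
  rewrite qc /=; apply/andP; split.
    apply/eqP => E; subst q; exact: (Ht t ht ut tq qt).
  have := pb_cmp HC qc (pb_self v HC); case/orP => // qv.
  case/orP: (covers_le cuv (le_trans ut tq) qv) => /eqP E.
    by rewrite -E qc in uC.
  by rewrite E.
exact: (Kup HC HD HN hup vu uv h1 h2).
Qed.

Lemma G1d C D u v a' : chain_cover C -> chain_cover D -> Nsort C D ->
  covers v u -> u \in pblock D v -> u \notin pblock C v -> a' \in pblock C v -> a' ⊑ v ->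
  (forall t, t \in pblock C u -> t ⊑ u -> a' ⊑ t -> a' \in pblock D t -> False) -> False.
Proof.
move=> HC HD HN cvu uD uC aC av Ht.
pose Z := [set s | [exists t in pblock C u, (t ⊑ u) && (s ⊑ t) && (s \in pblock D t)]].
have vu := ltW (covers_lt cvu).
have hdn : dncl D Z.
  move=> s s' hs' ss'; rewrite !inE => /exists_inP [t ht /andP [/andP [tu st] sD]].
  apply/exists_inP; exists t => //; rewrite tu (le_trans ss' st) /=.
  by rewrite -(pb_eq HD sD).
have h2 : (dnc C u < #|Z :&: pblock C u|)%N.
  rewrite -ltnS -dnc_S // ltnS; apply: subset_leq_card; apply/subsetP => q.
  rewrite !inE => /andP [qc qu].
  rewrite qc andbT; apply/exists_inP; exists q => //; rewrite qu lexx pb_self //=.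
have e : #|[set q in pblock C v | q ⊑ v]| = (#|[set q in pblock C v | q ⊑ v] :\ a'|).+1.
  by rewrite (cardsD1 a') inE aC av.
have h1 : (#|Z :&: pblock C v| <= dnc C v)%N.
  rewrite -ltnS -dnc_S // e ltnS; apply: subset_leq_card; apply/subsetP => q.
  rewrite !inE => /andP [/exists_inP [t ht /andP [/andP [tu qt] qD]] qc].
  rewrite qc /=; apply/andP; split.
    apply/eqP => E; subst q; exact: (Ht t ht tu qt qD).
  have := pb_cmp HC qc (pb_self v HC); case/orP => // vq.
  case/orP: (covers_le cvu vq (le_trans qt tu)) => /eqP E.
    by rewrite E.
  by rewrite -E qc in uC.
exact: (Kdn HC HD HN hdn uD vu h1 h2).
Qed.
End Gen.

Section Chains.
Variables (disp : Order.disp_t) (T : finPOrderType disp).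
Implicit Types (C D : {set {set T}}) (S c : {set T}) (u v w y : T).

Lemma sc_next c u : sat_chain c -> u \in c -> forall n v,
  (#|[set t in c | t ⊏ v]| <= n)%N -> v \in c -> u ⊏ v ->
  exists2 w, w \in c & covers u w && (w ⊑ v).
Proof.
move=> hc uc; elim=> [|n IH] v hn vc uv.
  by move: hn; rewrite leqn0 => /eqP/cards0_eq/setP/(_ u); rewrite !inE uc uv.
case: (boolP [exists t in c, (u ⊏ t) && (t ⊏ v)]).
  case/exists_inP => t tc /andP [ut tv].
  have : (#|[set t' in c | t' ⊏ t]| < #|[set t' in c | t' ⊏ v]|)%N.
    apply: proper_card; apply/properP; split.
      by apply/subsetP => q; rewrite !inE => /andP [-> /lt_trans]; apply.
    by exists t; rewrite !inE ?tc ?tv ?ltxx.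
  move=> lt; have [w wc /andP [cw wt]] := IH t (leq_trans (ltnSn _) (leq_trans lt hn)) tc ut.
  by exists w => //; rewrite cw (le_trans wt (ltW tv)).
move=> /exists_inPn H; exists v => //; rewrite lexx andbT.
apply: (sc_cover hc uc vc uv) => w wc uw wv.
by move: (H w wc); rewrite uw wv.
Qed.

Lemma sc_prev c v : sat_chain c -> v \in c -> forall n u,
  (#|[set t in c | u ⊏ t]| <= n)%N -> u \in c -> u ⊏ v ->
  exists2 w, w \in c & covers w v && (u ⊑ w).
Proof.
move=> hc vc; elim=> [|n IH] u hn uc uv.
  by move: hn; rewrite leqn0 => /eqP/cards0_eq/setP/(_ v); rewrite !inE vc uv.
case: (boolP [exists t in c, (u ⊏ t) && (t ⊏ v)]).
  case/exists_inP => t tc /andP [ut tv].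
  have : (#|[set t' in c | t ⊏ t']| < #|[set t' in c | u ⊏ t']|)%N.
    apply: proper_card; apply/properP; split.
      by apply/subsetP => q; rewrite !inE => /andP [-> /(lt_trans ut)].
    by exists t; rewrite !inE ?tc ?ut ?ltxx.
  move=> lt; have [w wc /andP [cw wt]] := IH t (leq_trans (ltnSn _) (leq_trans lt hn)) tc tv.
  by exists w => //; rewrite cw (le_trans (ltW ut) wt).
move=> /exists_inPn H; exists u => //; rewrite lexx andbT.
apply: (sc_cover hc uc vc uv) => w wc uw wv.
by move: (H w wc); rewrite uw wv.
Qed.

Lemma sc_next' c u v : sat_chain c -> u \in c -> v \in c -> u ⊏ v ->
  exists2 w, w \in c & covers u w && (w ⊑ v).
Proof. by move=> hc uc vc uv; apply: (sc_next hc uc (leqnn _) vc uv). Qed.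
Lemma sc_prev' c u v : sat_chain c -> u \in c -> v \in c -> u ⊏ v ->
  exists2 w, w \in c & covers w v && (u ⊑ w).
Proof. by move=> hc uc vc uv; apply: (sc_prev hc vc (leqnn _) uc uv). Qed.

End Chains.


Definition inU (disp : Order.disp_t) (T : finPOrderType disp) (a b Cb Dt : {set T}) (w : T) :=
  [|| w \in a, w \in b, w \in Cb | w \in Dt].

Record setup (disp : Order.disp_t) (T : finPOrderType disp)
  (C1 C2 : {set {set T}}) (a b : {set T}) (x y : T) (Cb Dt : {set T}) : Prop := Setup {
 s_cc1 : chain_cover C1; s_cc2 : chain_cover C2;
 s_N12 : Nsort C1 C2; s_N21 : Nsort C2 C1;
 s_edge : forall u v, covers u v -> exists2 c, c \in C1 :|: C2 & (u \in c) && (v \in c);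
 s_sa : sat_chain a; s_sb : sat_chain b; s_ab : a != b;
 s_xa : x \in a; s_xb : x \in b; s_ya : y \in a; s_yb : y \in b;
 s_mina : forall v, v \in a -> x ⊑ v; s_minb : forall v, v \in b -> x ⊑ v;
 s_maxa : forall v, v \in a -> v ⊑ y; s_maxb : forall v, v \in b -> v ⊑ y;
 s_cap : forall v, v \in a -> v \in b -> (v == x) || (v == y);
 s_conv : forall u v w, inU a b Cb Dt u -> inU a b Cb Dt v -> u ⊑ w -> w ⊑ v -> inU a b Cb Dt w;
 s_scb : sat_chain Cb; s_sdt : sat_chain Dt;
 s_cb : exists2 w1, is_maxof Cb w1 & covers w1 x;
 s_dt : exists2 z1, is_minof Dt z1 & covers y z1;
 s_tA1 : forall v, v \in a -> v != y -> v \in pblock C1 x;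
 s_tB1 : forall v, v \in b -> v != x -> v \in pblock C1 y;
 s_tB2 : forall v, v \in b -> v != y -> v \in pblock C2 x;
 s_tA2 : forall v, v \in a -> v != x -> v \in pblock C2 y }.

Lemma inU_swap (disp : Order.disp_t) (T : finPOrderType disp) (a b Cb Dt : {set T}) w :
  inU b a Cb Dt w = inU a b Cb Dt w.
Proof. by rewrite /inU orbA (orbC (w \in b)) -orbA. Qed.

Lemma setup_swap (disp : Order.disp_t) (T : finPOrderType disp)
  (C1 C2 : {set {set T}}) (a b : {set T}) (x y : T) (Cb Dt : {set T}) :
  setup C1 C2 a b x y Cb Dt -> setup C2 C1 b a x y Cb Dt.
Proof.
move=> [] cc1 cc2 N12 N21 edge sa sb ab xa xb ya yb mina minb maxa maxb cap conv
  scb sdt cb dt tA1 tB1 tB2 tA2.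
refine (@Setup _ _ C2 C1 b a x y Cb Dt cc2 cc1 N21 N12 _ sb sa _ xb xa yb ya minb mina maxb maxa
  _ _ scb sdt cb dt tB2 tA2 tA1 tB1).
- by move=> u v /edge [c]; rewrite setUC; exists c.
- by rewrite eq_sym.
- by move=> v vb va; apply: cap.
- by move=> u v w; rewrite !(@inU_swap _ _ a b); apply: conv.
Qed.

Lemma ioc_pb (disp : Order.disp_t) (T : finPOrderType disp) (C : {set {set T}}) (A : {set T}) x :
  chain_cover C -> in_chain_of C A -> x \in A -> forall v, v \in A -> v \in pblock C x.
Proof.
move=> H [c cC /subsetP Ac] xA v vA.
by rewrite (pb_of H cC (Ac x xA)); apply: Ac.
Qed.

Lemma setup_of (disp : Order.disp_t) (T : finPOrderType disp)
  (C1 C2 : {set {set T}}) (a b : {set T}) (x y : T) (Cb Dt : {set T}) :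
  N2_via C1 C2 -> diamond_bt a b x y Cb Dt -> typeI_or C1 C2 a b x y ->
  setup C1 C2 a b x y Cb Dt.
Proof.
case=> cc1 cc2 N3 N4 edge.
case=> [[/andP [sa sb] ab /and4P [/andP [xa /forall_inP mina] /andP [xb /forall_inP minb]
  /andP [ya /forall_inP maxa] /andP [yb /forall_inP maxb]] cap conv0] /andP [scb sdt] cb dt conv].
case=> I1 I2 I3 I4.
have xy : x != y.
  apply/eqP => E; subst y; move/eqP: ab; apply; apply/setP => v.
  apply/idP/idP => h.
    by have -> : v = x by apply: le_anti; rewrite mina ?maxa.
  by have -> : v = x by apply: le_anti; rewrite minb ?maxb.
have mem1 : forall v (A : {set T}) u, v \in A -> v != u -> v \in A :\ u.
  by move=> v A u h1 h2; rewrite !inE h1 h2.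
refine (@Setup _ _ C1 C2 a b x y Cb Dt cc1 cc2 N4 N3 edge sa sb ab xa xb ya yb mina minb maxa maxb
  _ _ scb sdt cb dt _ _ _ _).
- move=> v va vb; have : v \in a :&: b by rewrite inE va vb.
  by rewrite cap !inE.
- move=> u v w; rewrite /inU => hu hv uw wv.
  move/forall_inP: conv => /(_ u) ; rewrite !inE -!orbA => /(_ hu) /forall_inP /(_ v).
  rewrite !inE -!orbA => /(_ hv) /forallP /(_ w); rewrite uw wv /= !inE -!orbA; exact.
- move=> v va vy; apply: (ioc_pb cc1 I1 (mem1 _ _ _ xa xy)); exact: mem1.
- move=> v vb vx; apply: (ioc_pb cc1 I3 (mem1 _ _ _ yb _)); [by rewrite eq_sym | exact: mem1].
- move=> v vb vy; apply: (ioc_pb cc2 I2 (mem1 _ _ _ xb xy)); exact: mem1.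
- move=> v va vx; apply: (ioc_pb cc2 I4 (mem1 _ _ _ ya _)); [by rewrite eq_sym | exact: mem1].
Qed.


Section Basic1.
Variables (disp : Order.disp_t) (T : finPOrderType disp).
Variables (C1 C2 : {set {set T}}) (a b : {set T}) (x y : T) (Cb Dt : {set T}).
Hypothesis HS : setup C1 C2 a b x y Cb Dt.

Lemma a_int : exists2 v, v \in a & (v != x) && (v != y).
Proof.
case: HS => cc1 cc2 N12 N21 edge sa sb ab xa xb ya yb mina minb maxa maxb cap conv
  scb sdt cb dt tA1 tB1 tB2 tA2.
case: (boolP [exists v in a, (v != x) && (v != y)]) => [/exists_inP //| /exists_inPn Ha].
have Ha' : forall v, v \in a -> (v == x) || (v == y).
  by move=> v /Ha; rewrite negb_and !negbK.
have [v vb /andP [vx vy]] : exists2 v, v \in b & (v != x) && (v != y).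
  case: (boolP [exists v in b, (v != x) && (v != y)]) => [/exists_inP //| /exists_inPn Hb].
  exfalso; move/eqP: ab; apply; apply/setP => v; apply/idP/idP => h.
    by case/orP: (Ha' v h) => /eqP ->.
  by move: (Hb v h); rewrite negb_and !negbK; case/orP => /eqP ->.
have xv : x ⊏ v by rewrite lt_neqAle eq_sym vx minb.
have vy' : v ⊏ y by rewrite lt_neqAle vy maxb.
have cxy : covers x y.
  apply: (sc_cover sa xa ya (lt_trans xv vy')) => w wa xw wy.
  by case/orP: (Ha' w wa) => /eqP E; subst w; rewrite ltxx in xw wy.
exfalso; exact: (covers_btw cxy xv vy').
Qed.

Lemma xy_lt : x ⊏ y.
Proof.
case: a_int => v va /andP [vx vy].
have [_ _ _ _ _ _ _ _ _ _ _ _ mina _ maxa _ _ _ _ _ _ _ _ _ _ _] := HS.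
by apply: (@lt_le_trans _ _ v); rewrite ?maxa // lt_neqAle eq_sym vx mina.
Qed.

Lemma a1_ex : exists2 a1, a1 \in a & covers x a1 && (a1 != y).
Proof.
case: a_int => v va /andP [vx vy].
have [_ _ _ _ _ sa _ _ xa _ ya _ mina _ maxa _ _ _ _ _ _ _ _ _ _ _] := HS.
have [w wa /andP [cw wy]] := sc_next' sa xa ya xy_lt.
exists w => //; rewrite cw /=; apply/eqP => E; subst w.
apply: (covers_btw (w := v) cw); first by rewrite lt_neqAle eq_sym vx mina.
by rewrite lt_neqAle vy maxa.
Qed.

Lemma am_ex : exists2 am, am \in a & covers am y && (am != x).
Proof.
case: a_int => v va /andP [vx vy].
have [_ _ _ _ _ sa _ _ xa _ ya _ mina _ maxa _ _ _ _ _ _ _ _ _ _ _] := HS.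
have [w wa /andP [cw wy]] := sc_prev' sa xa ya xy_lt.
exists w => //; rewrite cw /=; apply/eqP => E; subst w.
apply: (covers_btw (w := v) cw); first by rewrite lt_neqAle eq_sym vx mina.
by rewrite lt_neqAle vy maxa.
Qed.
End Basic1.

Lemma b1_ex (disp : Order.disp_t) (T : finPOrderType disp) C1 C2 (a b : {set T}) x y Cb Dt :
  setup C1 C2 a b x y Cb Dt -> exists2 b1, b1 \in b & covers x b1 && (b1 != y).
Proof. by move/setup_swap/a1_ex. Qed.
Lemma bm_ex (disp : Order.disp_t) (T : finPOrderType disp) C1 C2 (a b : {set T}) x y Cb Dt :
  setup C1 C2 a b x y Cb Dt -> exists2 bm, bm \in b & covers bm y && (bm != x).
Proof. by move/setup_swap/am_ex. Qed.

Lemma incomp (disp : Order.disp_t) (T : finPOrderType disp) C1 C2 (a b : {set T}) x y Cb Dt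
  (HS : setup C1 C2 a b x y Cb Dt) a1 b1 :
  a1 \in a -> b1 \in b -> covers x a1 -> covers x b1 -> a1 != y -> a1 ⊑ b1 -> False.
Proof.
move=> a1a b1b ca cb a1y ab.
have xa1 := covers_lt ca.
case/orP: (covers_le cb (ltW xa1) ab) => /eqP E.
  by rewrite E ltxx in xa1.
have := s_cap HS a1a; rewrite E b1b => /(_ isT); rewrite -E (negbTE a1y) orbF => /eqP E'.
by rewrite E' ltxx in xa1.
Qed.

Lemma dis1 (disp : Order.disp_t) (T : finPOrderType disp) C1 C2 (a b : {set T}) x y Cb Dt
  (HS : setup C1 C2 a b x y Cb Dt) v :
  v \in pblock C1 x -> v \in pblock C1 y -> False.
Proof.
move=> vx vy.
have [a1 a1a /andP [ca a1y]] := a1_ex HS.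
have [b1 b1b /andP [cb b1y]] := b1_ex HS.
have cc1 := s_cc1 HS.
have h1 : a1 \in pblock C1 x by apply: (s_tA1 HS).
have h2 : b1 \in pblock C1 x.
  rewrite -(pb_eq cc1 vx) (pb_eq cc1 vy); apply: (s_tB1 HS) => //.
  by apply/eqP => E; move: (covers_lt cb); rewrite E ltxx.
case/orP: (pb_cmp cc1 h1 h2) => h.
  exact: (incomp HS a1a b1b ca cb a1y h).
exact: (incomp (setup_swap HS) b1b a1a cb ca b1y h).
Qed.

Lemma dis2 (disp : Order.disp_t) (T : finPOrderType disp) C1 C2 (a b : {set T}) x y Cb Dt
  (HS : setup C1 C2 a b x y Cb Dt) v :
  v \in pblock C2 x -> v \in pblock C2 y -> False.
Proof. exact: (dis1 (setup_swap HS)). Qed.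


Section Main1.
Variables (disp : Order.disp_t) (T : finPOrderType disp).
Variables (C1 C2 : {set {set T}}) (a b : {set T}) (x y : T) (Cb Dt : {set T}).
Hypothesis HS : setup C1 C2 a b x y Cb Dt.

Let cc1 := s_cc1 HS.
Let cc2 := s_cc2 HS.

Lemma xyF : (x == y) = false.
Proof. exact: lt_eqF (xy_lt HS). Qed.
Lemma yxF : (y == x) = false.
Proof. by rewrite eq_sym xyF. Qed.

Lemma Cb_lt t : t \in Cb -> t ⊏ x.
Proof.
have [w1 /andP [_ /forall_inP w1max] cw] := s_cb HS.
by move=> tC; apply: (le_lt_trans (w1max t tC)); apply: covers_lt.
Qed.

Lemma Dt_gt t : t \in Dt -> y ⊏ t.
Proof.
have [z1 /andP [_ /forall_inP z1min] cz] := s_dt HS.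
by move=> tD; apply: (lt_le_trans (covers_lt cz)); apply: z1min.
Qed.

Lemma blk_contra C u t : chain_cover C -> t \in pblock C u -> t \in pblock C x ->
  u \notin pblock C x -> False.
Proof.
move=> H h1 h2; rewrite -(pb_eq H h2) (pb_eq H h1) pb_self //.
Qed.

Lemma cb_step u v : u \in Cb -> covers u v -> v ⊑ x -> v \in pblock C1 x ->
  v \in pblock C2 x -> u \in pblock C2 x ->
  (forall t, t \in Cb -> u ⊏ t -> t \in pblock C1 x) -> u \in pblock C1 x.
Proof.
move=> uC cuv vx vA1 vB2 uB2 IH.
case: (boolP (u \in pblock C1 x)) => // uA; exfalso.
have [a1 a1a /andP [ca1 a1y]] := a1_ex HS.
have xa1 := covers_lt ca1.
have a1A1 : a1 \in pblock C1 x by apply: (s_tA1 HS).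
apply: (G1 cc1 cc2 (s_N12 HS) cuv (a' := a1)).
- by rewrite (pb_eq cc2 vB2).
- by rewrite (pb_eq cc1 vA1).
- by rewrite (pb_eq cc1 vA1).
- exact: (le_trans vx (ltW xa1)).
move=> t tu ut ta1 a1t.
have iU : inU a b Cb Dt t.
  by apply: (s_conv HS (u := u) (v := a1)) => //; rewrite /inU ?uC ?a1a ?orbT.
case: (eqVneq t u) => [E|tu'].
  subst t; apply: (dis2 HS (v := a1)); last by apply: (s_tA2 HS); rewrite // eq_sym lt_eqF.
  by rewrite -(pb_eq cc2 uB2).
apply: (blk_contra cc1 tu _ uA).
have hx : x \in pblock C1 x by apply: (s_tA1 HS); rewrite ?(s_xa HS) ?xyF.
case/or4P: iU => [ta|tb|tC|tD].
- case/orP: (covers_le ca1 (s_mina HS ta) ta1) => /eqP -> //.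
- case/orP: (covers_le ca1 (s_minb HS tb) ta1) => /eqP -> //.
- by apply: IH => //; rewrite lt_neqAle eq_sym tu' ut.
- exfalso; have := lt_le_trans (Dt_gt tD) (le_trans ta1 (s_maxa HS a1a)).
  by rewrite ltxx.
Qed.

Lemma blk_contra' C u t : chain_cover C -> t \in pblock C u -> t \in pblock C y ->
  u \notin pblock C y -> False.
Proof.
move=> H h1 h2; rewrite -(pb_eq H h2) (pb_eq H h1) pb_self //.
Qed.

Lemma dt_step u v : u \in Dt -> covers v u -> y ⊑ v -> v \in pblock C1 y ->
  v \in pblock C2 y -> u \in pblock C2 y ->
  (forall t, t \in Dt -> t ⊏ u -> t \in pblock C1 y) -> u \in pblock C1 y.
Proof.
move=> uD cvu yv vB1 vA2 uA2 IH.
case: (boolP (u \in pblock C1 y)) => // uB; exfalso.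
have [bm bmb /andP [cbm bmx]] := bm_ex HS.
have bmy := covers_lt cbm.
have bmB1 : bm \in pblock C1 y by apply: (s_tB1 HS).
apply: (G1d cc1 cc2 (s_N12 HS) cvu (a' := bm)).
- by rewrite (pb_eq cc2 vA2).
- by rewrite (pb_eq cc1 vB1).
- by rewrite (pb_eq cc1 vB1).
- exact: (le_trans (ltW bmy) yv).
move=> t tu tu2 bmt bmt2.
have iU : inU a b Cb Dt t.
  by apply: (s_conv HS (u := bm) (v := u)) => //; rewrite /inU ?uD ?bmb ?orbT.
case: (eqVneq t u) => [E|tu'].
  subst t; apply: (dis2 HS (v := bm)); first by apply: (s_tB2 HS); rewrite // lt_eqF.
  by rewrite -(pb_eq cc2 uA2).
apply: (blk_contra' cc1 tu _ uB).
have hy : y \in pblock C1 y by apply: (s_tB1 HS); rewrite ?(s_yb HS) ?yxF.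
case/or4P: iU => [ta|tb|tC|tD].
- case/orP: (covers_le cbm bmt (s_maxa HS ta)) => /eqP -> //.
- case/orP: (covers_le cbm bmt (s_maxb HS tb)) => /eqP -> //.
- exfalso; have := lt_le_trans (Cb_lt tC) (le_trans (s_minb HS bmb) bmt).
  by rewrite ltxx.
- by apply: IH => //; rewrite lt_neqAle tu' tu2.
Qed.

End Main1.


Lemma in_Dxy (T : finType) (B : {set T}) x y w :
  w \in B -> w != x -> w != y -> w \in B :\: [set x; y].
Proof. by move=> h1 h2 h3; rewrite !inE negb_or h1 h2 h3. Qed.

Section Bounds.
Variables (disp : Order.disp_t) (T : finPOrderType disp).
Variables (C1 C2 : {set {set T}}) (a b : {set T}) (x y : T) (Cb Dt : {set T}).
Hypothesis HS : setup C1 C2 a b x y Cb Dt.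

Let cc1 := s_cc1 HS.
Let cc2 := s_cc2 HS.

Lemma card_bxy : #|b :\: [set x; y]| = (#|b| - 2)%N.
Proof.
have E : b :&: [set x; y] = [set x; y].
  by apply/setIidPr/subsetP => w; rewrite !inE => /orP [] /eqP ->; rewrite ?(s_xb HS) ?(s_yb HS).
move: (cardsID [set x; y] b); rewrite E cards2 (xyF HS) /= => e; lia.
Qed.

Lemma card_axy : #|a :\: [set x; y]| = (#|a| - 2)%N.
Proof.
have E : a :&: [set x; y] = [set x; y].
  by apply/setIidPr/subsetP => w; rewrite !inE => /orP [] /eqP ->; rewrite ?(s_xa HS) ?(s_ya HS).
move: (cardsID [set x; y] a); rewrite E cards2 (xyF HS) /= => e; lia.
Qed.

Lemma top_bound : (forall z, z \in Dt -> (z \in pblock C2 y) && (z \in pblock C1 y)) ->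
  (#|Dt| < #|b| - 2)%N.
Proof.
move=> hDt; case: ltnP => // hle; exfalso.
have [am ama /andP [cam amx]] := am_ex HS.
have amy := covers_lt cam.
have amA2 : am \in pblock C2 y by apply: (s_tA2 HS).
have amA1 : am \in pblock C1 x by apply: (s_tA1 HS); rewrite // (lt_eqF amy).
have yA2 : y \in pblock C2 y by apply: (s_tA2 HS); rewrite ?(s_ya HS) ?(yxF HS).
have yB1 : y \in pblock C1 y by apply: (s_tB1 HS); rewrite ?(s_yb HS) ?(yxF HS).
have xA1 : x \in pblock C1 x by apply: (s_tA1 HS); rewrite ?(s_xa HS) ?(xyF HS).
have xam : x ⊑ am := s_mina HS ama.
pose S := [set s | ((s \in pblock C2 x) && (x ⊑ s)) ||
                   [exists r in pblock C1 x, (am ⊏ r) && (r ⊑ s)]].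
pose Q := [set w in pblock C1 y | y ⊏ w].
have hup : upcl C2 S.
  move=> s s' hs' ss'; rewrite !inE => /orP [/andP [sB xs]|/exists_inP [r rA /andP [amr rs]]].
    by rewrite -(pb_eq cc2 sB) hs' (le_trans xs ss').
  by apply/orP; right; apply/exists_inP; exists r => //; rewrite amr (le_trans rs ss').
have vu : y \in pblock C2 am by rewrite (pb_eq cc2 amA2).
have h1 : (upc C1 am <= #|S :&: pblock C1 am|)%N.
  rewrite upc_S // (pb_eq cc1 amA1).
  have <- : #|x |: [set w in pblock C1 x | am ⊏ w]| = #|[set w in pblock C1 x | am ⊏ w]|.+1.
    by rewrite cardsU1 !inE (le_gtF xam) andbF.
  apply: subset_leq_card; apply/subsetP => w; rewrite !inE.
  case/orP => [/eqP ->|/andP [wA amw]].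
    by rewrite lexx pb_self // xA1.
  rewrite wA andbT; apply/orP; right; apply/exists_inP; exists w => //; rewrite amw lexx //.
have ynS : y \in S -> False.
  rewrite !inE => /orP [/andP [yB _]|/exists_inP [r rA /andP [amr ry]]].
    exact: (dis2 HS yB yA2).
  case/orP: (covers_le cam (ltW amr) ry) => /eqP E.
    by rewrite E ltxx in amr.
  by apply: (dis1 HS (v := y)); [rewrite -E | ].
have memS : forall w, w \in S -> w \in pblock C1 y ->
    (w \in b :\: [set x; y]) || (w \in Q :\: Dt).
  move=> w wS wB1.
  case: (eqVneq w y) => [E|wy]; first by subst w; case: ynS.
  case/orP: (pb_cmp cc1 wB1 yB1) => [wy'|yw].
    move: wS; rewrite [w \in S]inE => /orP [/andP [wB2 xw]|/exists_inP [r rA /andP [amr rw]]].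
      have iU : inU a b Cb Dt w.
        by apply: (s_conv HS (u := x) (v := y)); rewrite // /inU ?(s_xa HS) ?(s_ya HS).
      case: (eqVneq w x) => [E|wx]; first by subst w; case: (dis1 HS xA1 wB1).
      apply/orP; left.
      case/or4P: iU => [wa|wb|wC|wD].
      - by case: (dis1 HS (v := w)) => //; apply: (s_tA1 HS).
      - by apply: in_Dxy.
      - by have := lt_le_trans (Cb_lt HS wC) xw; rewrite ltxx.
      - by have := lt_le_trans (Dt_gt HS wD) wy'; rewrite ltxx.
    exfalso; case/orP: (covers_le cam (ltW amr) (le_trans rw wy')) => /eqP E.
      by rewrite E ltxx in amr.
    by apply: (dis1 HS (v := y)); [rewrite -E | ].
  have ywl : y ⊏ w by rewrite lt_neqAle eq_sym wy yw.
  apply/orP; right; rewrite !inE wB1 ywl !andbT.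
  apply/negP => wD; case/andP: (hDt w wD) => wA2 _.
  move: wS; rewrite [w \in S]inE => /orP [/andP [wB2 xw]|/exists_inP [r rA /andP [amr rw]]].
    exact: (dis2 HS wB2 wA2).
  have iU : inU a b Cb Dt r.
    by apply: (s_conv HS (u := am) (v := w) _ _ (ltW amr) rw); rewrite /inU ?ama ?wD ?orbT.
  case/or4P: iU => [ra|rb|rC|rD].
  - case/orP: (covers_le cam (ltW amr) (s_maxa HS ra)) => /eqP E.
      by rewrite E ltxx in amr.
    by apply: (dis1 HS (v := y)); [rewrite -E | ].
  - apply: (dis1 HS rA); apply: (s_tB1 HS) => //.
    by apply/eqP => E; move: (le_lt_trans xam amr); rewrite E ltxx.
  - by have := lt_trans (Cb_lt HS rC) (le_lt_trans xam amr); rewrite ltxx.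
  - by case/andP: (hDt r rD) => _ /(dis1 HS rA).
have DQ : Dt \subset Q.
  by apply/subsetP => z zD; rewrite !inE (Dt_gt HS zD) andbT; case/andP: (hDt z zD).
have h2 : (#|S :&: pblock C1 y| < upc C1 y)%N.
  rewrite upc_S //.
  have e1 : (#|S :&: pblock C1 y| <= #|(b :\: [set x; y]) :|: (Q :\: Dt)|)%N.
    apply: subset_leq_card; apply/subsetP => w; rewrite inE => /andP [wS wB1].
    by rewrite inE; apply: memS.
  have e2 := cardsUI (b :\: [set x; y]) (Q :\: Dt).
  have e3 := cardsD Q Dt; rewrite (setIidPr DQ) in e3.
  have e4 := card_bxy.
  have e5 := subset_leq_card DQ.
  move: e1 e2 e3 e4 e5 hle.
  move: #|S :&: pblock C1 y| #|(b :\: [set x; y]) :|: (Q :\: Dt)| #|(b :\: [set x; y]) :&: (Q :\: Dt)|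
     #|b :\: [set x; y]| #|Q :\: Dt| #|Q| #|Dt| #|b|.
  clear; move=> n1 n2 n3 n4 n5 n6 n7 n8; lia.
exact: (Kup cc1 cc2 (s_N12 HS) hup vu (ltW amy) h1 h2).
Qed.


Lemma bot_bound : (forall z, z \in Cb -> (z \in pblock C1 x) && (z \in pblock C2 x)) ->
  (#|Cb| < #|a| - 2)%N.
Proof.
move=> hCb; case: ltnP => // hle; exfalso.
have [b1 b1b /andP [cb1 b1y]] := b1_ex HS.
have xb1 := covers_lt cb1.
have b1B2 : b1 \in pblock C2 x by apply: (s_tB2 HS).
have b1B1 : b1 \in pblock C1 y by apply: (s_tB1 HS); rewrite // eq_sym (lt_eqF xb1).
have yA2 : y \in pblock C2 y by apply: (s_tA2 HS); rewrite ?(s_ya HS) ?(yxF HS).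
have yB1 : y \in pblock C1 y by apply: (s_tB1 HS); rewrite ?(s_yb HS) ?(yxF HS).
have xA1 : x \in pblock C1 x by apply: (s_tA1 HS); rewrite ?(s_xa HS) ?(xyF HS).
have xB2 : x \in pblock C2 x by apply: pb_self.
have b1y' : b1 ⊑ y := s_maxb HS b1b.
pose Z := [set s | ((s \in pblock C2 y) && (s ⊑ y)) ||
                   [exists r in pblock C1 y, (r ⊏ b1) && (s ⊑ r)]].
pose P := [set w in pblock C1 x | w ⊏ x].
have hdn : dncl C2 Z.
  move=> s s' hs' ss'; rewrite !inE => /orP [/andP [sA sy]|/exists_inP [r rB /andP [rb1 sr]]].
    by rewrite -(pb_eq cc2 sA) hs' (le_trans ss' sy).
  by apply/orP; right; apply/exists_inP; exists r => //; rewrite rb1 (le_trans ss' sr).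
have h2 : (dnc C1 b1 < #|Z :&: pblock C1 b1|)%N.
  rewrite /dnc (pb_eq cc1 b1B1).
  have <- : #|y |: [set w in pblock C1 y | w ⊏ b1]| = #|[set w in pblock C1 y | w ⊏ b1]|.+1.
    by rewrite cardsU1 !inE (le_gtF b1y') andbF.
  apply: subset_leq_card; apply/subsetP => w; rewrite !inE.
  case/orP => [/eqP ->|/andP [wB wb1]].
    by rewrite lexx yA2 yB1.
  rewrite wB andbT; apply/orP; right; apply/exists_inP; exists w => //; rewrite wb1 lexx //.
have xnZ : x \in Z -> False.
  rewrite [x \in Z]inE => /orP [/andP [xA _]|/exists_inP [r rB /andP [rb1 xr]]].
    exact: (dis2 HS xB2 xA).
  case/orP: (covers_le cb1 xr (ltW rb1)) => /eqP E.
    by apply: (dis1 HS (v := x)); [ | rewrite -E].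
  by rewrite E ltxx in rb1.
have memZ : forall w, w \in Z -> w \in pblock C1 x ->
    (w \in a :\: [set x; y]) || (w \in P :\: Cb).
  move=> w wZ wA1.
  case: (eqVneq w x) => [E|wx]; first by subst w; case: xnZ.
  case/orP: (pb_cmp cc1 wA1 xA1) => [wx'|xw].
    have wxl : w ⊏ x by rewrite lt_neqAle wx wx'.
    apply/orP; right; rewrite !inE wA1 wxl !andbT.
    apply/negP => wC; case/andP: (hCb w wC) => _ wB2.
    move: wZ; rewrite [w \in Z]inE => /orP [/andP [wA2 _]|/exists_inP [r rB /andP [rb1 wr]]].
      exact: (dis2 HS wB2 wA2).
    have iU : inU a b Cb Dt r.
      by apply: (s_conv HS (u := w) (v := b1) _ _ wr (ltW rb1)); rewrite /inU ?wC ?b1b ?orbT.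
    case/or4P: iU => [ra|rb|rC|rD].
    - case/orP: (covers_le cb1 (s_mina HS ra) (ltW rb1)) => /eqP E.
        by apply: (dis1 HS (v := x)); [ | rewrite -E].
      by rewrite E ltxx in rb1.
    - case/orP: (covers_le cb1 (s_minb HS rb) (ltW rb1)) => /eqP E.
        by apply: (dis1 HS (v := x)); [ | rewrite -E].
      by rewrite E ltxx in rb1.
    - by case/andP: (hCb r rC) => rA1 _; apply: (dis1 HS rA1 rB).
    - by have := lt_trans (Dt_gt HS rD) (lt_le_trans rb1 b1y'); rewrite ltxx.
  apply/orP; left.
  move: wZ; rewrite [w \in Z]inE => /orP [/andP [wA2 wy']|/exists_inP [r rB /andP [rb1 wr]]].
    have iU : inU a b Cb Dt w.
      by apply: (s_conv HS (u := x) (v := y)); rewrite // /inU ?(s_xa HS) ?(s_ya HS).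
    case: (eqVneq w y) => [E|wy]; first by subst w; case: (dis1 HS wA1 yB1).
    case/or4P: iU => [wa|wb|wC|wD].
    - by apply: in_Dxy.
    - by case: (dis1 HS (v := w)) => //; apply: (s_tB1 HS).
    - by have := lt_le_trans (Cb_lt HS wC) xw; rewrite ltxx.
    - by have := lt_le_trans (Dt_gt HS wD) wy'; rewrite ltxx.
  exfalso; case/orP: (covers_le cb1 (le_trans xw wr) (ltW rb1)) => /eqP E.
    by apply: (dis1 HS (v := x)); [ | rewrite -E].
  by rewrite E ltxx in rb1.
have CP : Cb \subset P.
  by apply/subsetP => z zC; rewrite !inE (Cb_lt HS zC) andbT; case/andP: (hCb z zC).
have h1 : (#|Z :&: pblock C1 x| <= dnc C1 x)%N.
  rewrite /dnc -/P.
  have e1 : (#|Z :&: pblock C1 x| <= #|(a :\: [set x; y]) :|: (P :\: Cb)|)%N.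
    apply: subset_leq_card; apply/subsetP => w; rewrite inE => /andP [wZ wA1].
    by rewrite inE; apply: memZ.
  have e2 := cardsUI (a :\: [set x; y]) (P :\: Cb).
  have e3 := cardsD P Cb; rewrite (setIidPr CP) in e3.
  have e4 := card_axy.
  have e5 := subset_leq_card CP.
  move: e1 e2 e3 e4 e5 hle.
  move: #|Z :&: pblock C1 x| #|(a :\: [set x; y]) :|: (P :\: Cb)| #|(a :\: [set x; y]) :&: (P :\: Cb)|
     #|a :\: [set x; y]| #|P :\: Cb| #|P| #|Cb| #|a|.
  clear; move=> n1 n2 n3 n4 n5 n6 n7 n8; lia.
exact: (Kdn cc1 cc2 (s_N12 HS) hdn b1B2 (ltW xb1) h1 h2).
Qed.

End Bounds.


Section Main2.
Variables (disp : Order.disp_t) (T : finPOrderType disp).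
Variables (C1 C2 : {set {set T}}) (a b : {set T}) (x y : T) (Cb Dt : {set T}).
Hypothesis HS : setup C1 C2 a b x y Cb Dt.

Let cc1 := s_cc1 HS.
Let cc2 := s_cc2 HS.

Lemma cb_one u : u \in Cb ->
  (forall t, t \in Cb -> u ⊏ t -> (t \in pblock C1 x) && (t \in pblock C2 x)) ->
  (u \in pblock C1 x) && (u \in pblock C2 x).
Proof.
move=> uC IH.
have [w1 /andP [w1C /forall_inP w1max] cw1] := s_cb HS.
have xA1 : x \in pblock C1 x by apply: pb_self.
have xB2 : x \in pblock C2 x by apply: pb_self.
have [v [cuv vx vA vB]] : exists v, [/\ covers u v, v ⊑ x, v \in pblock C1 x & v \in pblock C2 x].
  case: (eqVneq u w1) => [E|uw1].
    by subst u; exists x; split; rewrite ?lexx.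
  have uw : u ⊏ w1 by rewrite lt_neqAle; apply/andP; split; [exact: uw1 | exact: w1max].
  have [v vC /andP [cuv vw1]] := sc_next' (s_scb HS) uC w1C uw.
  case/andP: (IH v vC (covers_lt cuv)) => vA vB.
  by exists v; split => //; apply: (le_trans vw1); apply: ltW; apply: covers_lt.
have [c cC /andP [uc vc]] := s_edge HS cuv.
move: cC; rewrite inE => /orP [cC|cC].
  have uA : u \in pblock C1 x by rewrite -(pb_eq cc1 vA) (pb_of cc1 cC vc).
  rewrite uA /=.
  apply: (cb_step (setup_swap HS) uC cuv vx vB vA uA).
  by move=> t tC ut; case/andP: (IH t tC ut).
have uB : u \in pblock C2 x by rewrite -(pb_eq cc2 vB) (pb_of cc2 cC vc).
rewrite uB andbT.
apply: (cb_step HS uC cuv vx vA vB uB).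
by move=> t tC ut; case/andP: (IH t tC ut).
Qed.

Lemma dt_one u : u \in Dt ->
  (forall t, t \in Dt -> t ⊏ u -> (t \in pblock C2 y) && (t \in pblock C1 y)) ->
  (u \in pblock C2 y) && (u \in pblock C1 y).
Proof.
move=> uD IH.
have [z1 /andP [z1D /forall_inP z1min] cz1] := s_dt HS.
have yA2 : y \in pblock C2 y by apply: pb_self.
have yB1 : y \in pblock C1 y by apply: pb_self.
have [v [cvu yv vA vB]] : exists v, [/\ covers v u, y ⊑ v, v \in pblock C2 y & v \in pblock C1 y].
  case: (eqVneq u z1) => [E|uz1].
    by subst u; exists y; split; rewrite ?lexx.
  have zu : z1 ⊏ u by rewrite lt_neqAle; apply/andP; split; [rewrite eq_sym; exact: uz1 | exact: z1min].
  have [v vD /andP [cvu z1v]] := sc_prev' (s_sdt HS) z1D uD zu.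
  case/andP: (IH v vD (covers_lt cvu)) => vA vB.
  by exists v; split => //; apply: (le_trans _ z1v); apply: ltW; apply: covers_lt.
have [c cC /andP [vc uc]] := s_edge HS cvu.
move: cC; rewrite inE => /orP [cC|cC].
  have uB : u \in pblock C1 y by rewrite -(pb_eq cc1 vB) (pb_of cc1 cC vc).
  rewrite uB andbT.
  apply: (dt_step (setup_swap HS) uD cvu yv vA vB uB).
  by move=> t tD tu; case/andP: (IH t tD tu).
have uA : u \in pblock C2 y by rewrite -(pb_eq cc2 vA) (pb_of cc2 cC vc).
rewrite uA /=.
apply: (dt_step HS uD cvu yv vB vA uA).
by move=> t tD tu; case/andP: (IH t tD tu).
Qed.

Lemma cb_all u : u \in Cb -> (u \in pblock C1 x) && (u \in pblock C2 x).
Proof.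
suff H : forall n u, (#|[set t in Cb | u ⊏ t]| <= n)%N -> u \in Cb ->
    (u \in pblock C1 x) && (u \in pblock C2 x).
  by apply: (H _ u (leqnn _)).
elim=> [|n IHn] {}u hn uC; apply: cb_one => // t tC ut.
  by move: hn; rewrite leqn0 => /eqP/cards0_eq/setP/(_ t); rewrite !inE tC ut.
apply: IHn => //; rewrite -ltnS; apply: leq_trans hn; apply: proper_card.
apply/properP; split.
  by apply/subsetP => q; rewrite !inE => /andP [-> /(lt_trans ut)].
by exists t; rewrite !inE ?tC ?ut ?ltxx.
Qed.

Lemma dt_all u : u \in Dt -> (u \in pblock C2 y) && (u \in pblock C1 y).
Proof.
suff H : forall n u, (#|[set t in Dt | t ⊏ u]| <= n)%N -> u \in Dt ->
    (u \in pblock C2 y) && (u \in pblock C1 y).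
  by apply: (H _ u (leqnn _)).
elim=> [|n IHn] {}u hn uD; apply: dt_one => // t tD tu.
  by move: hn; rewrite leqn0 => /eqP/cards0_eq/setP/(_ t); rewrite !inE tD tu.
apply: IHn => //; rewrite -ltnS; apply: leq_trans hn; apply: proper_card.
apply/properP; split.
  by apply/subsetP => q; rewrite !inE => /andP [-> /lt_trans]; apply.
by exists t; rewrite !inE ?tD ?tu ?ltxx.
Qed.

End Main2.

Lemma main_or (disp : Order.disp_t) (T : finPOrderType disp)
    (C1 C2 : {set {set T}}) (a b : {set T}) (x y : T) (Cb Dt : {set T}) :
  setup C1 C2 a b x y Cb Dt ->
  [/\ in_chain_of C1 ((Cb :|: a) :\ y), in_chain_of C2 ((Cb :|: b) :\ y),
      in_chain_of C2 ((a :|: Dt) :\ x) & in_chain_of C1 ((b :|: Dt) :\ x)] /\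
  (maxn #|Cb| #|Dt| < minn (#|a| - 2) (#|b| - 2))%N.
Proof.
move=> HS.
have cc1 := s_cc1 HS; have cc2 := s_cc2 HS.
have hCb := cb_all HS; have hDt := dt_all HS.
split.
  split.
  - exists (pblock C1 x); first exact: pb_in.
    apply/subsetP => w; rewrite !inE => /andP [wy /orP [wC|wa]].
      by case/andP: (hCb w wC).
    exact: (s_tA1 HS).
  - exists (pblock C2 x); first exact: pb_in.
    apply/subsetP => w; rewrite !inE => /andP [wy /orP [wC|wb]].
      by case/andP: (hCb w wC).
    exact: (s_tB2 HS).
  - exists (pblock C2 y); first exact: pb_in.
    apply/subsetP => w; rewrite !inE => /andP [wx /orP [wa|wD]].
      exact: (s_tA2 HS).
    by case/andP: (hDt w wD).
  - exists (pblock C1 y); first exact: pb_in.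
    apply/subsetP => w; rewrite !inE => /andP [wx /orP [wb|wD]].
      exact: (s_tB1 HS).
    by case/andP: (hDt w wD).
have b1 := top_bound HS hDt.
have b2 : (#|Dt| < #|a| - 2)%N.
  apply: (top_bound (setup_swap HS)) => z zD.
  by case/andP: (hDt z zD) => h1 h2; rewrite h1 h2.
have b3 := bot_bound HS hCb.
have b4 : (#|Cb| < #|b| - 2)%N.
  apply: (bot_bound (setup_swap HS)) => z zC.
  by case/andP: (hCb z zC) => h1 h2; rewrite h1 h2.
move: b1 b2 b3 b4; clear; lia.
Qed.

Lemma N2_swap (disp : Order.disp_t) (T : finPOrderType disp) (C1 C2 : {set {set T}}) :
  N2_via C1 C2 -> N2_via C2 C1.
Proof.
case=> c1 c2 n3 n4 e; split => // u v /e [c]; rewrite setUC; exists c => //.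
Qed.

Theorem lemma2p8 (disp : Order.disp_t) (T : finPOrderType disp)
    (C1 C2 : {set {set T}}) (a b : {set T}) (x y : T) (Cb Dt : {set T}) :
  N2_via C1 C2 ->
  diamond_bt a b x y Cb Dt ->
  typeI C1 C2 a b x y ->
  ((exists D1 D2, ((D1, D2) = (C1, C2) \/ (D1, D2) = (C2, C1)) /\
     [/\ in_chain_of D1 ((Cb :|: a) :\ y), in_chain_of D2 ((Cb :|: b) :\ y),
         in_chain_of D2 ((a :|: Dt) :\ x) & in_chain_of D1 ((b :|: Dt) :\ x)])
   /\ maxn #|Cb| #|Dt| < minn (#|a| - 2) (#|b| - 2))%N.
Proof.
move=> HN HD [HI|HI].
  have [h1 h2] := main_or (setup_of HN HD HI).
  by split => //; exists C1, C2; split => //; left.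
have [h1 h2] := main_or (setup_of (N2_swap HN) HD HI).
by split => //; exists C2, C1; split => //; right.
Qed.
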